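(* Let $E$ be a classification instance with feature set $F$ containing at least one positive and at least one negative example. Then $|E|\le 2\binom{|F|}{\delta_{\max}}D_{\max}^{\delta_{\max}}$.
   Context: A classification instance (CI) $E=E^+\cup E^-$ is a finite set (no repetitions) of examples $e:F\to\mathbb{Z}$ over a common feature set $F$, partitioned into positive examples $E^+$ and negative examples $E^-$. For examples $e,e'$, $\lambda(e,e')$ is the set of features on which they differ; $\delta_{\max}=\max_{e^+\in E^+,e^-\in E^-}|\lambda(e^+,e^-)|$. $D_{\max}=\max_{f\in F}|\{e(f):e\in E\}|$. *)

(* Defs.v *)
From HB Require Import structures.
From mathcomp Require Import all_boot all_order all_algebra.
From mathcomp Require Import finmap.
Set Implicit Arguments. Unset Strict Implicit. Unset Printing Implicit Defensive.
Local Open Scope fset_scope.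

Definition example (F : finType) := {ffun F -> int}.

Definition lambda (F : finType) (e e' : example F) : {set F} :=
  [set f | e f != e' f].

Definition delta_max (F : finType) (Ep En : {fset example F}) : nat :=
  \max_(p <- Ep) \max_(n <- En) #|lambda p n|.

Definition D_max (F : finType) (Ep En : {fset example F}) : nat :=
  \max_(f : F) #|` [fset (e : example F) f | e in Ep `|` En] |.

(* Main.v *)
Require Import Defs.
From HB Require Import structures.
From mathcomp Require Import all_boot all_order all_algebra.
From mathcomp Require Import finmap.
Local Open Scope fset_scope.

Lemma ext_set (F : finType) (d : nat) (A : {set F}) :
  #|A| <= d -> d <= #|F| -> exists B : {set F}, (A \subset B) && (#|B| == d).
Proof.
elim: d => [|d IH] hA hd.
  exists A; rewrite subxx /=; by rewrite leqn0 in hA.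
case: (ltngtP #|A| d.+1) => h; last by exists A; rewrite subxx h eqxx.
  have [B /andP [AB /eqP cB]] := IH h (ltnW hd).
  have : 0 < #|~: B| by rewrite cardsCs setCK cB subn_gt0.
  case/card_gt0P => x; rewrite in_setC => xB.
  exists (x |: B); rewrite cardsU1 xB cB eqxx andbT.
  by apply: subset_trans AB _; apply/subsetP => y yB; rewrite in_setU1 yB orbT.
by rewrite ltnNge hA in h.
Qed.

Lemma count_bound (F : finType) (s : seq (example F)) (e0 : example F) (d D : nat)
  (V : F -> seq int) :
  uniq s -> d <= #|F| -> (forall x f, x \in s -> x f \in V f) ->
  (forall f, size (V f) <= D.+1) -> (forall x, x \in s -> #|lambda e0 x| <= d) ->
  size s <= 'C(#|F|, d) * D.+1 ^ d.
Proof.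
move=> us hd hV hVs hl.
pose S x := odflt set0 [pick A : {set F} | (lambda e0 x \subset A) && (#|A| == d)].
have HS : forall x, x \in s -> (lambda e0 x \subset S x) && (#|S x| == d).
  move=> x xs; rewrite /S; case: pickP => [A -> //|].
  have [B hB] := @ext_set _ _ _ (hl x xs) hd.
  by move=> /(_ B); rewrite hB.
pose c x f : 'I_D.+1 := inord (index (x f) (V f)).
have Hc : forall x f, x \in s -> nth 0%R (V f) (c x f) = x f.
  move=> x f xs; rewrite /c inordK ?nth_index ?hV //.
  by apply: leq_trans (hVs f); rewrite index_mem hV.
have Hout : forall x f, x \in s -> f \notin S x -> x f = e0 f.
  move=> x f xs fS; have /andP [sub _] := HS x xs.
  apply/eqP; rewrite eq_sym; apply/negPn; apply: contra fS => h.
  by apply: (subsetP sub); rewrite /lambda inE.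
pose phi x := (S x, [ffun i : 'I_d => oapp (c x) ord0 (nth None [seq Some f | f <- enum (S x)] i)]).
have inj : {in s &, injective phi}.
  move=> x y xs ys [eS eg]; apply/ffunP => f.
  case: (boolP (f \in S x)) => fS; last first.
    by rewrite (Hout x f xs fS) (Hout y f ys) // -eS.
  have /andP [_ /eqP cS] := HS x xs.
  have hi : index f (enum (S x)) < d by rewrite -cS cardE index_mem mem_enum.
  have := congr1 (fun g : {ffun 'I_d -> 'I_D.+1} => g (Ordinal hi)) eg.
  rewrite !ffunE /= -eS (nth_map f) ?nth_index ?mem_enum //=; last by rewrite -cardE cS.
  by move=> h; rewrite -(Hc x f xs) -(Hc y f ys) h.
have : size (map phi s) <= size (enum (setX [set A : {set F} | #|A| == d] [set: {ffun 'I_d -> 'I_D.+1}])).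
  apply: uniq_leq_size; first by rewrite (map_inj_in_uniq inj).
  move=> z /mapP [x xs ->]; rewrite mem_enum !inE /=.
  have /andP [_ ->] := HS x xs; by [].

move=> h; rewrite -(size_map phi s); apply: leq_trans h _; rewrite -cardE cardsX card_draws cardsT card_ffun !card_ord.
by [].
Qed.

Lemma lambdaC (F : finType) (e e' : example F) : lambda e e' = lambda e' e.
Proof. by apply/setP => f; rewrite !inE eq_sym. Qed.

Theorem lemma8 (F : finType) (Ep En : {fset example F}) :
  [disjoint Ep & En] ->
  Ep != fset0 -> En != fset0 ->
  #|` Ep `|` En| <= 2 * 'C(#|F|, delta_max Ep En) * D_max Ep En ^ delta_max Ep En.
Proof.
move=> dis /fset0Pn [p pP] /fset0Pn [n nN].
pose V f := enum_fset [fset (e : example F) f | e in Ep `|` En].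
have hV : forall x f, x \in Ep `|` En -> x f \in V f.
  by move=> x f xs; rewrite /V -[_ \in enum_fset _]/(_ \in _); apply/imfsetP; exists x.
have hVs : forall f, size (V f) <= D_max Ep En.
  by move=> f; rewrite /D_max; apply: (leq_bigmax (F := fun f => #|` [fset (e : example F) f | e in Ep `|` En]|) f).
have hd : delta_max Ep En <= #|F|.
  apply/bigmax_leqP_seq => x _ _; apply/bigmax_leqP_seq => y _ _; exact: max_card.
have hl : forall x y, x \in Ep -> y \in En -> #|lambda x y| <= delta_max Ep En.
  move=> x y xP yN; rewrite /delta_max.
  apply: leq_trans (leq_bigmax_seq (F := fun x => \max_(n0 <- En) #|lambda x n0|) x xP erefl).
  exact: (leq_bigmax_seq (F := fun y => #|lambda x y|) y yN erefl).
case: (pickP (fun _ : F => true)) => [f0 _|F0].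
  have : 0 < D_max Ep En.
    apply: leq_trans (hVs f0); rewrite lt0n; apply/eqP => h0.
    have := hV p f0; rewrite inE pP /= (size0nil h0) in_nil; by move/(_ isT).
  case eD: (D_max Ep En) => [|D'] // _.
  rewrite eD in hVs.
  have bP : #|` Ep| <= 'C(#|F|, delta_max Ep En) * D'.+1 ^ delta_max Ep En.
    apply: (@count_bound _ _ n _ _ V (fset_uniq Ep) hd) => //.
      by move=> x f xs; apply: hV; rewrite inE xs.
    by move=> x xs; rewrite lambdaC; apply: hl.
  have bN : #|` En| <= 'C(#|F|, delta_max Ep En) * D'.+1 ^ delta_max Ep En.
    apply: (@count_bound _ _ p _ _ V (fset_uniq En) hd) => //.
      by move=> x f xs; apply: hV; rewrite inE xs orbT.
    by move=> x xs; apply: hl.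
  rewrite cardfsU; apply: leq_trans (leq_subr _ _) _.
  by rewrite -mulnA mul2n -addnn leq_add.
have pn : p = n by apply/ffunP => f; have := F0 f.
by have := fdisjointP dis p pP; rewrite pn nN.
Qed.
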